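(* Let $G$ be a 5-vertex-critical $(P_5,\text{chair})$-free graph and let $C=v_1v_2v_3v_4v_5v_1$ be an induced $C_5$ in $G$. Then $|S^1_3(i)|\le 2$ for all $1\le i\le 5$.
   Context: All graphs are finite and simple; $P_5$ is the path on 5 vertices; the chair is a $P_4$ plus a vertex adjacent to exactly one of the two middle vertices of the $P_4$; ''$H$-free'' means no induced subgraph isomorphic to $H$; $G$ is $k$-vertex-critical if $\chi(G)=k$ and $\chi(G-v)<k$ for all $v$. Indices modulo 5. $S^1_3(i)=\{v\in V(G)\setminus V(C): N(v)\cap V(C)=\{v_{i-1},v_i,v_{i+1}\}\}$. *)

(* Defs.v *)
From mathcomp Require Import all_boot.
Set Implicit Arguments. Unset Strict Implicit. Unset Printing Implicit Defensive.

Definition simple_graph (T : finType) (e : rel T) := symmetric e /\ irreflexive e.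

Definition colorable (T : finType) (e : rel T) (A : {set T}) (k : nat) : bool :=
  [exists f : {ffun T -> 'I_k},
     [forall x in A, forall y in A, e x y ==> (f x != f y)]].

Lemma colorable_exists (T : finType) (e : rel T) (A : {set T}) (irr : irreflexive e) :
  exists k, colorable e A k.
Proof.
exists #|T|; apply/existsP; exists [ffun x => enum_rank x].
apply/forall_inP => x _; apply/forall_inP => y _; apply/implyP => Exy.
rewrite !ffunE; apply/negP => /eqP /enum_rank_inj Hxy; subst y.
by rewrite irr in Exy.
Qed.

(* Chromatic number of the subgraph of a simple graph induced by A
   (for a non-simple relation it is defined as 0, irrelevant below). *)
Definition chi (T : finType) (e : rel T) (A : {set T}) : nat :=
  match boolP [forall x, ~~ e x x] with
  | AltTrue H => ex_minn (@colorable_exists T e A (fun x => negbTE (forallP H x)))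
  | AltFalse _ => 0
  end.

Definition vertex_critical (T : finType) (e : rel T) (k : nat) : Prop :=
  chi e [set: T] = k /\ forall v : T, chi e ([set: T] :\ v) < k.

Definition induced_copy (T : finType) (e : rel T) (n : nat) (h : rel 'I_n)
  (f : 'I_n -> T) : Prop :=
  injective f /\ forall i j, e (f i) (f j) = h i j.

Definition H_free (T : finType) (e : rel T) (n : nat) (h : rel 'I_n) : Prop :=
  forall f : 'I_n -> T, ~ induced_copy e h f.

Definition P5 : rel 'I_5 := fun i j => (i.+1 == j :> nat) || (j.+1 == i :> nat).

Definition chair_edge (a b : nat) : bool :=
  [|| (a == 0) && (b == 1), (a == 1) && (b == 2), (a == 2) && (b == 3)
    | (a == 1) && (b == 4)].
Definition chair : rel 'I_5 := fun i j => chair_edge i j || chair_edge j i.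

Definition C5 : rel 'I_5 :=
  fun i j => ((i.+1 %% 5) == j :> nat) || ((j.+1 %% 5) == i :> nat).

(* S^1_3(i) w.r.t. the induced cycle C = v_0 ... v_4: vertices outside C whose
   neighbourhood on C is exactly {v_{i-1}, v_i, v_{i+1}} (indices mod 5). *)
Definition S13 (T : finType) (e : rel T) (v : 'I_5 -> T) (i : 'I_5) : {set T} :=
  [set x | [forall j, x != v j] &&
           [forall j : 'I_5, e x (v j) ==
              [|| (j == i :> nat), (j == (i.+1 %% 5) :> nat) | (j == (i + 4) %% 5 :> nat)]]].

(* Main.v *)
Require Import Defs.
From mathcomp Require Import all_boot.

Lemma chi_col (T : finType) (e : rel T) (A : {set T}) :
  irreflexive e -> colorable e A (chi e A).
Proof.
move=> irr; rewrite /chi; destruct (boolP [forall x, ~~ e x x]) as [H|H].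
  by case: ex_minnP.
by exfalso; move/negP: H; apply; apply/forallP => x; rewrite irr.
Qed.

Lemma chi_K5 (T : finType) (e : rel T) (A : {set T}) (g : 'I_5 -> T) :
  irreflexive e -> (forall j, g j \in A) ->
  (forall j k, j != k -> e (g j) (g k)) -> 5 <= chi e A.
Proof.
move=> irr gA gE; have := @chi_col T e A irr; move: (chi e A) => k.
case/existsP => f /forall_inP Hf.
have inj : injective (fun j => f (g j)).
  move=> j l; apply: contra_eq => Hjl.
  by have := implyP (forall_inP (Hf _ (gA j)) _ (gA l)) (gE _ _ Hjl).
by have := leq_card _ inj; rewrite !card_ord.
Qed.

Lemma ord5_ind (P : 'I_5 -> Prop) :
  P (@Ordinal 5 0 isT) -> P (@Ordinal 5 1 isT) -> P (@Ordinal 5 2 isT) ->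
  P (@Ordinal 5 3 isT) -> P (@Ordinal 5 4 isT) -> forall j, P j.
Proof.
move=> H0 H1 H2 H3 H4 [[|[|[|[|[|j]]]]] Hj];
  by rewrite ?(bool_irrelevance Hj isT).
Qed.

Lemma chair_ok (T : finType) (e : rel T) (a b p1 p2 p3 : T) :
  irreflexive e -> symmetric e -> H_free e chair ->
  e a p1 -> ~~ e a p2 -> ~~ e a p3 -> e b p1 -> ~~ e b p2 -> ~~ e b p3 ->
  a != p1 -> a != p2 -> a != p3 -> b != p1 -> b != p2 -> b != p3 ->
  e p1 p2 -> e p2 p3 -> ~~ e p1 p3 -> p1 != p2 -> p2 != p3 -> p1 != p3 ->
  a != b -> e a b.
Proof.
move=> irr sym chf a1 a2 a3 b1 b2 b3 na1 na2 na3 nb1 nb2 nb3 e12 e23 e13 n12 n23 n13 nab.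
apply/negPn/negP => nE.
apply: (chf (fun j : 'I_5 => nth a [:: a; p1; p2; p3; b] j)); split.
  move=> j k; apply: contra_eq; elim/ord5_ind: j; elim/ord5_ind: k => //= _;
    rewrite // eq_sym //.
move: a2 a3 b2 b3 e13 nE => /negbTE a2 /negbTE a3 /negbTE b2 /negbTE b3 /negbTE e13 /negbTE nE.
have ir := irr.
elim/ord5_ind; elim/ord5_ind => /=; rewrite /chair /chair_edge /= ?irr //;
  rewrite sym //.
Qed.

Lemma main_at (T : finType) (e : rel T) (S : {set T}) (p0 p1 p2 p3 : T) :
  simple_graph e -> vertex_critical e 5 -> H_free e chair ->
  (forall x, x \in S -> [/\ e x p0, e x p1, ~~ e x p2, ~~ e x p3 &
                          [/\ x != p0, x != p1, x != p2 & x != p3]]) ->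
  e p0 p1 -> e p1 p2 -> e p2 p3 -> ~~ e p1 p3 -> p0 != p2 -> p1 != p3 ->
  #|S| <= 2.
Proof.
move=> [sym irr] [_ crit] chf HS e01 e12 e23 n13 n02 np13.
have n12 : p1 != p2 by apply: contraTneq e12 => ->; rewrite irr.
have n23 : p2 != p3 by apply: contraTneq e23 => ->; rewrite irr.
have n01 : p0 != p1 by apply: contraTneq e01 => ->; rewrite irr.
have cl : forall a b, a \in S -> b \in S -> a != b -> e a b.
  move=> a b /HS [a0 a1 a2 a3 [na0 na1 na2 na3]] /HS [b0 b1 b2 b3 [nb0 nb1 nb2 nb3]].
  exact: (@chair_ok T e a b p1 p2 p3 irr sym chf a1 a2 a3 b1 b2 b3 na1 na2 na3 nb1 nb2 nb3 e12 e23 n13 n12 n23 np13).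
rewrite leqNgt; apply/negP => /card_gt2P [x [y [z [[xS yS zS] [nxy nyz nzx]]]]].
have := crit p2; rewrite ltnNge => /negP; apply.
apply: (@chi_K5 T e _ (fun j : 'I_5 => nth x [:: x; y; z; p0; p1] j) irr).
  move: xS yS zS => /HS [? ? ? ? [? ? ? ?]] /HS [? ? ? ? [? ? ? ?]] /HS [? ? ? ? [? ? ? ?]].
  by elim/ord5_ind; rewrite /= !inE andbT // eq_sym.
have exy := cl _ _ xS yS nxy; have eyz := cl _ _ yS zS nyz; have ezx := cl _ _ zS xS nzx.
move: xS yS zS => /HS [? ? ? ? [? ? ? ?]] /HS [? ? ? ? [? ? ? ?]] /HS [? ? ? ? [? ? ? ?]].
elim/ord5_ind; elim/ord5_ind => //= _; rewrite // sym //.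
Qed.

Lemma S13P (T : finType) (e : rel T) (v : 'I_5 -> T) i x : x \in S13 e v i ->
  (forall j, e x (v j) = [|| (j == i :> nat), (j == (i.+1 %% 5) :> nat) | (j == (i + 4) %% 5 :> nat)])
  /\ (forall j, (x != v j) = true).
Proof.
rewrite inE => /andP [/forallP Hn /forallP He]; split => j.
  exact/eqP/He.
exact: Hn.
Qed.

Theorem mainTheorem13 (T : finType) (e : rel T) (v : 'I_5 -> T) :
  simple_graph e ->
  vertex_critical e 5 ->
  H_free e P5 ->
  H_free e chair ->
  induced_copy e C5 v ->
  forall i : 'I_5, #|S13 e v i| <= 2.
Proof.
move=> sg crit _ chf [vinj Hv]; elim/ord5_ind.
- apply: (@main_at T e _ (v (@Ordinal 5 0 isT)) (v (@Ordinal 5 1 isT))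
           (v (@Ordinal 5 2 isT)) (v (@Ordinal 5 3 isT)) sg crit chf);
  [ move=> x /S13P [He Hn]; rewrite !He !Hn /=; by []
  | by rewrite Hv | by rewrite Hv | by rewrite Hv | by rewrite Hv
  | by rewrite (inj_eq vinj) | by rewrite (inj_eq vinj) ].
- apply: (@main_at T e _ (v (@Ordinal 5 1 isT)) (v (@Ordinal 5 2 isT))
           (v (@Ordinal 5 3 isT)) (v (@Ordinal 5 4 isT)) sg crit chf);
  [ move=> x /S13P [He Hn]; rewrite !He !Hn /=; by []
  | by rewrite Hv | by rewrite Hv | by rewrite Hv | by rewrite Hv
  | by rewrite (inj_eq vinj) | by rewrite (inj_eq vinj) ].
- apply: (@main_at T e _ (v (@Ordinal 5 2 isT)) (v (@Ordinal 5 3 isT))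
           (v (@Ordinal 5 4 isT)) (v (@Ordinal 5 0 isT)) sg crit chf);
  [ move=> x /S13P [He Hn]; rewrite !He !Hn /=; by []
  | by rewrite Hv | by rewrite Hv | by rewrite Hv | by rewrite Hv
  | by rewrite (inj_eq vinj) | by rewrite (inj_eq vinj) ].
- apply: (@main_at T e _ (v (@Ordinal 5 3 isT)) (v (@Ordinal 5 4 isT))
           (v (@Ordinal 5 0 isT)) (v (@Ordinal 5 1 isT)) sg crit chf);
  [ move=> x /S13P [He Hn]; rewrite !He !Hn /=; by []
  | by rewrite Hv | by rewrite Hv | by rewrite Hv | by rewrite Hv
  | by rewrite (inj_eq vinj) | by rewrite (inj_eq vinj) ].
- apply: (@main_at T e _ (v (@Ordinal 5 4 isT)) (v (@Ordinal 5 0 isT))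
           (v (@Ordinal 5 1 isT)) (v (@Ordinal 5 2 isT)) sg crit chf);
  [ move=> x /S13P [He Hn]; rewrite !He !Hn /=; by []
  | by rewrite Hv | by rewrite Hv | by rewrite Hv | by rewrite Hv
  | by rewrite (inj_eq vinj) | by rewrite (inj_eq vinj) ].
Qed.
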